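(* Let $J$ be a real symmetric $N\times N$ matrix with zero diagonal, and let $\lambda_1(J)$ denote its smallest eigenvalue. Let $\Delta$ be a real number with $\Delta \ge \Delta_{\min} := \max(0,-\lambda_1(J))$, and set $\tilde{J} := J + \Delta\, \mathbb{1}_{N\times N}$. If $x\in\mathbb{R}^N$ satisfies $x = \operatorname{sgn}(Jx)$ (the zero-temperature TAP / naive mean-field equation), then $x$ also satisfies $x = \operatorname{sgn}(\tilde{J}x)$ (the zero-temperature critical point equation of the Hamiltonian density).
   Context: $\operatorname{sgn}$ is applied componentwise to vectors, with $\operatorname{sgn}(t)=1$ for $t>0$, $\operatorname{sgn}(t)=-1$ for $t<0$ and $\operatorname{sgn}(0)=0$. $J$ is the coupling matrix of an Ising spin system with Hamiltonian $H=-\sum_i h_i s_i-\sum_{i<j}J_{ij}s_is_j$, and $\tilde J$ is the ''shifted coupling matrix''. *)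

(* Defs.v *)
From HB Require Import structures.
From mathcomp Require Import all_boot all_order all_algebra.
From mathcomp Require Import reals.
Set Implicit Arguments. Unset Strict Implicit. Unset Printing Implicit Defensive.
Import Order.TTheory GRing.Theory Num.Theory.
Local Open Scope ring_scope.

Definition sgnv (R : realType) (N : nat) (v : 'cV[R]_N) : 'cV[R]_N :=
  map_mx (fun t : R => Num.sg t) v.

Definition smallest_eigenvalue (R : realType) (N : nat) (J : 'M[R]_N) (lam : R) : Prop :=
  eigenvalue J lam /\ forall a : R, eigenvalue J a -> lam <= a.

(* Main.v *)
Require Import Defs.
From HB Require Import structures.
From mathcomp Require Import all_boot all_order all_algebra.
From mathcomp Require Import reals.
From mathcomp Require Import lra.
Import Order.TTheory GRing.Theory Num.Theory.
Local Open Scope ring_scope.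

Theorem proposition1 (R : realType) (N : nat) (J : 'M[R]_N) (lam1 Delta : R)
  (x : 'cV[R]_N) :
  J^T = J ->
  (forall i : 'I_N, J i i = 0) ->
  smallest_eigenvalue J lam1 ->
  Num.max 0 (- lam1) <= Delta ->
  x = sgnv (J *m x) ->
  x = sgnv ((J + Delta%:M) *m x).
Proof.
move=> _ _ _ hD hx.
have D0 : 0 <= Delta by apply: le_trans hD; rewrite le_max lexx.
rewrite mulmxDl mul_scalar_mx.
apply/matrixP => i j.
have e : x i j = Num.sg ((J *m x) i j) by rewrite {1}hx mxE.
rewrite /sgnv [in RHS]mxE.
have -> : ((J *m x + Delta *: x) i j = (J *m x) i j + Delta * x i j) by rewrite [LHS]mxE [X in _ + X]mxE.
rewrite e.
set y := (J *m x) i j.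
have [yp|yn|->] := ltrgtP y 0.
- rewrite (ltr0_sg yp) mulrN1 ltr0_sg //.
  move: yp D0; lra.
- rewrite (gtr0_sg yn) mulr1 gtr0_sg //.
  move: yn D0; lra.
- by rewrite sgr0 mulr0 addr0 sgr0.
Qed.
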